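(* Let $R$ be a reflexive relation on $U$ and $x\in U$. (i) If $x\notin\mathcal S$ and $\{x\}^{\blacktriangle}$ is completely join-irreducible in $\wp(U)^{\blacktriangle}$, then $(\{x\}^{\blacktriangledown},\{x\}^{\blacktriangle})$ is completely join-irreducible in $\mathrm{DM(RS)}$. (ii) If $\{x\}^{\vartriangle}$ is completely join-irreducible in $\wp(U)^{\vartriangle}$, then $(\{x\}^{\vartriangle\blacktriangledown},\{x\}^{\vartriangle\blacktriangle})$ is completely join-irreducible in $\mathrm{DM(RS)}$.
   Context: Let $U$ be a set and $R\subseteq U\times U$ a binary relation. For $x\in U$, $R(x)=\{y\in U\mid (x,y)\in R\}$ and $\breve R(x)=\{y\in U\mid (y,x)\in R\}$. For $X\subseteq U$: $X^{\blacktriangledown}=\{x\in U\mid R(x)\subseteq X\}$, $X^{\blacktriangle}=\{x\in U\mid R(x)\cap X\neq\emptyset\}$, $X^{\triangledown}=\{x\in U\mid \breve R(x)\subseteq X\}$, $X^{\vartriangle}=\{x\in U\mid \breve R(x)\cap X\neq\emptyset\}$; composites like $X^{\vartriangle\blacktriangledown}$ mean $(X^{\vartriangle})^{\blacktriangledown}$. $\wp(U)^{\blacktriangledown}=\{X^{\blacktriangledown}\mid X\subseteq U\}$ and similarly $\wp(U)^{\blacktriangle},\wp(U)^{\vartriangle}$, complete lattices under $\subseteq$ (joins in $\wp(U)^{\blacktriangle},\wp(U)^{\vartriangle}$ are unions). $\mathcal S=\{x\in U\mid |R(x)|=1\}$. $\mathrm{RS}=\{(X^{\blacktriangledown},X^{\blacktriangle})\mid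 X\subseteq U\}$ ordered coordinatewise; $\mathrm{DM(RS)}$ is its Dedekind–MacNeille completion, identified with $\{(A,B)\in\wp(U)^{\blacktriangledown}\times\wp(U)^{\blacktriangle}\mid A^{\vartriangle\blacktriangle}\subseteq B,\ A\cap\mathcal S=B\cap\mathcal S\}$ ordered coordinatewise, with meets $\bigwedge_i(X_i,Y_i)=(\bigcap_iX_i,(\bigcap_iY_i)^{\triangledown\blacktriangle})$ and joins $\bigvee_i(X_i,Y_i)=((\bigcup_iX_i)^{\vartriangle\blacktriangledown},\bigcup_iY_i)$. An element $j$ of a complete lattice $L$ is completely join-irreducible if $j=\bigvee S$ implies $j\in S$ for every $S\subseteq L$. *)

(* Defs.v *)
From mathcomp Require Import all_boot.
From mathcomp Require Import boolp classical_sets.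
Set Implicit Arguments. Unset Strict Implicit. Unset Printing Implicit Defensive.
Local Open Scope classical_set_scope.

Section RoughSets.
Variable T : Type.
Variable R : T -> T -> Prop.

Definition Rimg (x : T) : set T := [set y | R x y].
Definition Rinv (x : T) : set T := [set y | R y x].

(* X^{blacktriangledown}, X^{blacktriangle}, X^{triangledown}, X^{vartriangle} *)
Definition boxB (X : set T) : set T := [set x | Rimg x `<=` X].
Definition diaB (X : set T) : set T := [set x | Rimg x `&` X !=set0].
Definition boxW (X : set T) : set T := [set x | Rinv x `<=` X].
Definition diaW (X : set T) : set T := [set x | Rinv x `&` X !=set0].

Definition singR : set T := [set x | exists y, Rimg x = [set y]].

(* DM(RS), identified with the set of pairs described in the paper *)
Definition DMRS : set (set T * set T) :=
  [set p | range boxB p.1 /\ range diaB p.2 /\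
           diaB (diaW p.1) `<=` p.2 /\ p.1 `&` singR = p.2 `&` singR].
End RoughSets.

Definition set_le (T : Type) (A B : set T) : Prop := A `<=` B.
Definition pair_le (T : Type) (p q : set T * set T) : Prop :=
  p.1 `<=` q.1 /\ p.2 `<=` q.2.

Definition is_lub (X : Type) (le : X -> X -> Prop) (L : set X) (S : set X) (j : X) :=
  L j /\ (forall s, S s -> le s j) /\
  (forall u, L u -> (forall s, S s -> le s u) -> le j u).

Definition compl_join_irr (X : Type) (le : X -> X -> Prop) (L : set X) (j : X) :=
  L j /\ forall S : set X, S `<=` L -> is_lub le L S j -> S j.

(* Main.v *)
Require Import Defs.
From mathcomp Require Import all_boot.
From mathcomp Require Import boolp classical_sets.
Local Open Scope classical_set_scope.

Lemma pair_eq' (T : Type) (p q : set T * set T) : p.1 = q.1 -> p.2 = q.2 -> p = q.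
Proof. by case: p q => [a b] [c d] /= -> ->. Qed.

Lemma RS_in_DM (T : Type) (R : T -> T -> Prop) (Y : set T) :
  DMRS R (boxB R Y, diaB R Y).
Proof.
split; first by exists Y.
split; first by exists Y.
split.
  move=> z [w [Rzw [v [Rvw HvY]]]]; exists w; split => //; exact: HvY.
apply/seteqP; split => s [Hs [t Ht]].
  have Rs : forall v, R s v = (v = t) by move=> v; rewrite -[R s v]/(Rimg R s v) Ht.
  split; last by exists t; exact Ht.
  exists t; split; first by rewrite /Rimg /= Rs.
  by apply: Hs; rewrite /Rimg /= Rs.
have Rs : forall v, R s v = (v = t) by move=> v; rewrite -[R s v]/(Rimg R s v) Ht.
split; last by exists t; exact Ht.
case: Hs => w [Rsw Yw] v; rewrite /Rimg /= Rs => ->.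
by move: Rsw; rewrite /Rimg /= Rs => <-.
Qed.

Lemma unitW (T : Type) (R : T -> T -> Prop) (X : set T) : X `<=` boxB R (diaW R X).
Proof. by move=> y Xy z Ryz; exists y; split. Qed.

Lemma counitW (T : Type) (R : T -> T -> Prop) (Y : set T) : diaW R (boxB R Y) `<=` Y.
Proof. by move=> z [v [Rvz Hv]]; exact: Hv. Qed.

Lemma monoW (T : Type) (R : T -> T -> Prop) (X Y : set T) : X `<=` Y -> diaW R X `<=` diaW R Y.
Proof. by move=> h z [v [Rvz Hv]]; exists v; split => //; apply: h. Qed.

Lemma monoBox (T : Type) (R : T -> T -> Prop) (X Y : set T) : X `<=` Y -> boxB R X `<=` boxB R Y.
Proof. by move=> h z Hz w Hw; apply: h; apply: Hz. Qed.

Lemma monoDia (T : Type) (R : T -> T -> Prop) (X Y : set T) : X `<=` Y -> diaB R X `<=` diaB R Y.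
Proof. by move=> h z [v [Rvz Hv]]; exists v; split => //; apply: h. Qed.

Lemma box0 (T : Type) (R : T -> T -> Prop) (reflR : forall x, R x x) (x : T) :
  ~ singR R x -> boxB R [set x] = set0.
Proof.
move=> nS; apply/seteqP; split => y Hy //.
have yx : y = x := Hy y (reflR y).
subst y; exfalso; apply: nS; exists x; apply/seteqP; split => t.
  exact: Hy.
by move=> ->; exact: reflR.
Qed.

Theorem mainTheorem13 (T : Type) (R : T -> T -> Prop) (reflR : forall x, R x x) (x : T) :
  ( ~ singR R x ->
    compl_join_irr (@set_le T) (range (diaB R)) (diaB R [set x]) ->
    compl_join_irr (@pair_le T) (DMRS R) (boxB R [set x], diaB R [set x]) ) /\
  ( compl_join_irr (@set_le T) (range (diaW R)) (diaW R [set x]) ->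
    compl_join_irr (@pair_le T) (DMRS R)
      (boxB R (diaW R [set x]), diaB R (diaW R [set x])) ).
Proof.
split.
  move=> nS [Lj Hj]; split; first exact: (@RS_in_DM T R).
  move=> S SL [_ [ub least]].
  have b0 := @box0 T R reflR x nS.
  have : [set q | exists2 p, S p & p.2 = q] (diaB R [set x]).
    apply: Hj.
      by move=> q [p Sp <-]; have [_ [h _]] := SL p Sp; exact h.
    split => //; split.
      by move=> q [p Sp <-]; exact: (ub p Sp).2.
    move=> u [Y _ <-] Hu.
    have [] := least (boxB R Y, diaB R Y) (@RS_in_DM T R Y).
      move=> s Ss; split.
        by move=> t /((ub s Ss).1); rewrite b0.
      by apply: Hu; exists s.
    by [].
  move=> [p Sp Hp].
  suff -> : (boxB R [set x], diaB R [set x]) = p by [].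
  apply: pair_eq' => /=; last by rewrite Hp.
  rewrite b0; apply/seteqP; split => t //= h.
  by have := (ub p Sp).1 t h; rewrite b0.
set D := diaW R [set x].
move=> [Lj Hj]; split; first exact: (@RS_in_DM T R).
move=> S SL [_ [ub least]].
have : [set q | exists2 p, S p & diaW R p.1 = q] D.
  apply: Hj.
    by move=> q [p _ <-]; exists p.1.
  split => //; split.
    move=> q [p Sp <-].
    apply: (@subset_trans _ (diaW R (boxB R D))); last exact: counitW.
    apply: monoW; exact: (ub p Sp).1.
  move=> u [W _ <-] Hu.
  set U := diaW R W.
  set Z := [set z | (exists2 p, S p & diaB R [set z] `<=` p.2) \/ U z].
  have DMp : DMRS R (boxB R U, diaB R Z).
    split; first by exists U.
    split; first by exists Z.
    split.
      apply: monoDia => z hz; right; exact: counitW hz.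
    apply/seteqP; split => s [Hs [t Ht]].
      have Rs : forall v, R s v = (v = t) by move=> v; rewrite -[R s v]/(Rimg R s v) Ht.
      split; last by exists t; exact Ht.
      exists t; split; first by rewrite /Rimg /= Rs.
      by right; apply: Hs; rewrite /Rimg /= Rs.
    have Rs : forall v, R s v = (v = t) by move=> v; rewrite -[R s v]/(Rimg R s v) Ht.
    split; last by exists t; exact Ht.
    case: Hs => w [Rsw Zw].
    have wt : w = t by move: Rsw; rewrite /Rimg /= Rs.
    case: Zw => [[p Sp Hp] | Uw].
      have sp2 : p.2 s by apply: Hp; exists w; split.
      have [_ [_ [_ Heq]]] := SL p Sp.
      have : (p.1 `&` singR R) s by rewrite Heq; split => //; exists t; exact Ht.
      case => sp1 _.
      apply: (@monoBox T R _ U); last exact: unitW sp1.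
      by apply: Hu; exists p.
    by move=> v; rewrite /Rimg /= Rs => ->; rewrite -wt.
  have ubZ : forall p, S p -> pair_le p (boxB R U, diaB R Z).
    move=> p Sp; split.
      apply: (@subset_trans _ (boxB R (diaW R p.1))); first exact: unitW.
      by apply: monoBox; apply: Hu; exists p.
    have [_ [[Y _ HY] _]] := SL p Sp.
    move=> b Hb; rewrite -HY in Hb; case: Hb => y [Rby Yy].
    exists y; split => //; left; exists p => //.
    by rewrite -HY => c [v [Rcv vy]]; exists v; split => //; rewrite vy.
  have [h _] := least _ DMp ubZ.
  move=> z Dz.
  apply: (@counitW T R U); apply: (@monoW T R _ _ h).
  exact: (@monoW T R _ _ (@unitW T R [set x])).
move=> [p Sp Hp].
have [[Y _ HY] [_ [Hdd _]]] := SL p Sp.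
suff -> : (boxB R D, diaB R D) = p by [].
apply: pair_eq' => /=; apply/seteqP; split.
- rewrite -Hp -HY; apply: monoBox; exact: counitW.
- exact: (ub p Sp).1.
- by rewrite -Hp.
- exact: (ub p Sp).2.
Qed.
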